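(* Let $a_{ij}>0$ ($i,j=1,2$) and $b_1,b_2>0$, and assume (A1) $\langle Ax,x\rangle>0$ for all $x\in\mathbb{R}^2\setminus\{0\}$, where $A=(a_{ij})$, and (A2) the matrix $\begin{pmatrix}b_1a_{11}&b_1a_{12}\\ b_2a_{21}&b_2a_{22}\end{pmatrix}$ has two real positive eigenvalues. Consider, for $\lambda>0$, $\alpha\in[0,1]$, $\tau>0$, the problem $$\dot x_1(t)=-\alpha\lambda\big(a_{11}x_1(t-\tau/\lambda)+a_{12}x_2(t-\tau/\lambda)\big)(b_1+x_1(t)),$$ $$\dot x_2(t)=-\alpha\lambda\big(a_{21}x_1(t-\tau/\lambda)+a_{22}x_2(t-\tau/\lambda)\big)(b_2+x_2(t)).\qquad (\ast)$$ Let $\lambda_1,\lambda_2\in\mathbb{R}^+$ with $\lambda_1<\lambda_2$. Then: (1) there exist positive numbers $m_0,d_1,d_2,d_3,d_4$ such that for each $\lambda\in[\lambda_1,\lambda_2]$, $\alpha\in[0,1]$ and $\tau\ge 1$, every solution $(x_1,x_2)\in\Theta_0$ of $(\ast)$ satisfies $|\dot x_i|_\infty<m_0$ and $|\ddot x_i|_\infty<m_0$ for $i=1,2$, and $$-b_1<-d_1<x_1(t)<d_3,\qquad -b_2<-d_2<x_2(t)<d_4\quad\text{for all }t\in[0,2\pi];$$ (2) there exists $\alpha_0\in(0,1)$ such that for $\alpha\in[0,\alpha_0]$ (and $\lambda\in[\lambda_1,\lambda_2]$) problem $(\ast)$ has no nontrivial solution $(x_1,x_2)\in\Theta_0$.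
   Context: $\hat E$ denotes the Banach space of functions $x\in C([0,2\pi],\mathbb{R})$ with $\int_0^{2\pi}\dot x(t)^2\,dt<\infty$, $x(0)=x(2\pi)$ and $\int_0^{2\pi}x(t)\,dt=0$, with norm $\|x\|^2=\int_0^{2\pi}(\dot x(t)^2+x(t)^2)\,dt$; such functions are identified with their $2\pi$-periodic extensions to $\mathbb{R}$. $E=\hat E\times\hat E$, and $\Theta_0=\{(x_1,x_2)\in E: x_i(t)>-b_i \text{ for } t\in[0,2\pi],\ i=1,2\}$. $|u|_\infty=\sup_{t\in[0,2\pi]}|u(t)|$. A solution of $(\ast)$ is a pair in $E$ satisfying the equations for all $t$; nontrivial means not identically zero. *)

(* Defs.v *)
From Stdlib Require Import Reals.
From Coquelicot Require Import Coquelicot.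
Open Scope R_scope.

(* Elements of \hat E, identified with their 2*PI-periodic extensions to R.
   The H^1 condition is expressed with the classical derivative (solutions of
   ( * ) are differentiable everywhere, so this is the derivative in question). *)
Definition in_Ehat (x : R -> R) : Prop :=
  (forall t, continuous x t) /\
  (forall t, x (t + 2 * PI) = x t) /\
  RInt x 0 (2 * PI) = 0 /\
  ex_RInt (fun t => (Derive x t) ^ 2) 0 (2 * PI).

Definition in_Theta0 (b1 b2 : R) (x1 x2 : R -> R) : Prop :=
  forall t, 0 <= t <= 2 * PI -> -b1 < x1 t /\ -b2 < x2 t.

Definition supnorm_lt (u : R -> R) (m : R) : Prop :=
  exists c, c < m /\ forall t, 0 <= t <= 2 * PI -> Rabs (u t) <= c.

Definition is_solution (a11 a12 a21 a22 b1 b2 lam alpha tau : R)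
    (x1 x2 : R -> R) : Prop :=
  in_Ehat x1 /\ in_Ehat x2 /\
  forall t,
    is_derive x1 t
      (- alpha * lam * (a11 * x1 (t - tau / lam) + a12 * x2 (t - tau / lam))
         * (b1 + x1 t)) /\
    is_derive x2 t
      (- alpha * lam * (a21 * x1 (t - tau / lam) + a22 * x2 (t - tau / lam))
         * (b2 + x2 t)).

Definition cond_A1 (a11 a12 a21 a22 : R) : Prop :=
  forall y1 y2 : R, (y1 <> 0 \/ y2 <> 0) ->
    (a11 * y1 + a12 * y2) * y1 + (a21 * y1 + a22 * y2) * y2 > 0.

(* (A2): the matrix [[b1 a11, b1 a12],[b2 a21, b2 a22]] has two real positive
   eigenvalues, i.e. its characteristic polynomial det(M - z I) factors as
   (z - mu1)(z - mu2) with mu1, mu2 > 0 real. *)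
Definition cond_A2 (a11 a12 a21 a22 b1 b2 : R) : Prop :=
  exists mu1 mu2 : R, 0 < mu1 /\ 0 < mu2 /\
    forall z : R,
      (b1 * a11 - z) * (b2 * a22 - z) - (b1 * a12) * (b2 * a21)
      = (z - mu1) * (z - mu2).

(* Main.v *)
Require Import Defs.
From Stdlib Require Import Reals Lra Psatz.
From Coquelicot Require Import Coquelicot.
Open Scope R_scope.

Lemma mvt_le (f df : R -> R) (C u t : R) :
  (forall x, is_derive f x (df x)) -> (forall x, df x <= C) -> u <= t ->
  f t - f u <= C * (t - u).
Proof.
  intros Hd Hb Hut.
  destruct (MVT_gen f u t df) as [c [_ Hc]].
  - intros; apply Hd.
  - intros x _. apply continuity_pt_filterlim.
    apply (ex_derive_continuous f x). exists (df x); apply Hd.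
  - rewrite Hc. apply Rmult_le_compat_r; [lra|apply Hb].
Qed.

Lemma periodic_nat (f : R -> R) (P : R) :
  (forall t, f (t + P) = f t) -> forall n t, f (t + INR n * P) = f t.
Proof.
  intros Hp n; induction n as [|n IH]; intros t.
  - simpl. f_equal; ring.
  - rewrite S_INR. replace (t + (INR n + 1) * P) with ((t + INR n * P) + P) by ring.
    rewrite Hp; apply IH.
Qed.

Lemma periodic_reduce (f : R -> R) (P : R) :
  0 < P -> (forall t, f (t + P) = f t) ->
  forall t, exists u, 0 <= u <= P /\ f t = f u.
Proof.
  intros HP Hp.
  assert (Hpos : forall n t, 0 <= t < INR n * P -> exists u, 0 <= u <= P /\ f t = f u).
  { induction n as [|n IH]; intros t Ht.
    - simpl in Ht; lra.
    - destruct (Rlt_or_le t P) as [H|H].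
      + exists t; split; [lra|reflexivity].
      + rewrite S_INR in Ht.
        destruct (IH (t - P)) as [u [Hu Hfu]]; [lra|].
        exists u; split; [exact Hu|]. rewrite <- Hfu.
        replace t with ((t - P) + P) at 1 by ring. apply Hp. }
  intros t.
  destruct (INR_unbounded (Rabs t / P)) as [n Hn].
  assert (Hn' : Rabs t < INR n * P).
  { apply Rmult_gt_compat_r with (r := P) in Hn; [|lra].
    unfold Rdiv in Hn. rewrite Rmult_assoc, Rinv_l in Hn; lra. }
  destruct (Hpos (2 * n)%nat (t + INR n * P)) as [u [Hu Hfu]].
  - rewrite mult_INR; simpl. split.
    + pose proof (Rle_abs (-t)); rewrite Rabs_Ropp in H; lra.
    + pose proof (Rle_abs t); lra.
  - exists u; split; auto. rewrite <- Hfu. symmetry; apply periodic_nat; auto.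
Qed.

Lemma osc_bound (f df : R -> R) (C : R) :
  0 <= C -> (forall t, f (t + 2 * PI) = f t) ->
  (forall x, is_derive f x (df x)) -> (forall x, df x <= C) ->
  forall t u, f t <= f u + 2 * PI * C.
Proof.
  intros HC Hp Hd Hb t u.
  pose proof PI_RGT_0 as Hpi.
  destruct (periodic_reduce f (2*PI) ltac:(lra) Hp t) as [t' [Ht' Ht]].
  destruct (periodic_reduce f (2*PI) ltac:(lra) Hp u) as [u' [Hu' Hu]].
  rewrite Ht, Hu.
  destruct (Rle_or_lt u' t') as [H|H].
  - pose proof (mvt_le f df C u' t' Hd Hb H).
    assert (C * (t' - u') <= C * (2 * PI)) by (apply Rmult_le_compat_l; lra). lra.
  - rewrite <- (Hp t').
    pose proof (mvt_le f df C u' (t' + 2*PI) Hd Hb ltac:(lra)).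
    assert (C * (t' + 2*PI - u') <= C * (2 * PI)) by (apply Rmult_le_compat_l; lra). lra.
Qed.

Lemma sign_points (x : R -> R) :
  (forall t, continuous x t) -> RInt x 0 (2 * PI) = 0 ->
  (exists u, x u <= 0) /\ (exists u, 0 <= x u).
Proof.
  intros Hc HI. pose proof PI_RGT_0 as Hpi. split.
  - destruct (Classical_Prop.classic (exists u, x u <= 0)) as [H|H]; auto.
    exfalso.
    assert (0 < RInt x 0 (2*PI)); [|lra].
    apply RInt_gt_0; [lra| |intros; apply Hc].
    intros y _. apply Rnot_le_lt. intro Hy. apply H. exists y; exact Hy.
  - destruct (Classical_Prop.classic (exists u, 0 <= x u)) as [H|H]; auto.
    exfalso.
    assert (0 < RInt (fun t => opp (x t)) 0 (2*PI)).
    { apply RInt_gt_0; [lra| |].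
      + intros y _. unfold opp; simpl. apply Ropp_0_gt_lt_contravar. apply Rnot_le_lt. intro Hy. apply H. exists y; exact Hy.
      + intros y _. apply (continuous_opp x). apply Hc. }
    assert (E := @RInt_opp R_CompleteNormedModule x 0 (2*PI)).
    specialize (E (ex_RInt_continuous x 0 (2*PI) (fun z _ => Hc z))). unfold opp in *; simpl in *.
    rewrite E, HI in H0. lra.
Qed.

Lemma exp_mono (x y : R) : x <= y -> exp x <= exp y.
Proof. intros [H|H]; [left; apply exp_increasing; auto | subst; lra]. Qed.

Lemma ln_mono (x y : R) : 0 < x -> x <= y -> ln x <= ln y.
Proof. intros Hx [H|H]; [left; apply ln_increasing; auto | subst; lra]. Qed.

Lemma comp_bound (z L df : R -> R) (b k c0 C : R) :
  0 < b -> 0 <= k -> k * c0 <= C -> 0 <= C ->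
  (forall t, 0 < b + z t) -> (forall t, z (t + 2 * PI) = z t) ->
  (forall t, is_derive z t (df t)) ->
  (forall t, df t = - k * L t * (b + z t)) ->
  (forall t, - c0 < L t) ->
  (exists u, z u <= 0) -> (exists u, 0 <= z u) ->
  forall t, b * exp (- (2 * PI * C)) <= b + z t <= b * exp (2 * PI * C).
Proof.
  intros Hb Hk HC HC0 Hpos Hper Hd Hdf HL [u1 Hu1] [u2 Hu2] t.
  pose proof PI_RGT_0 as Hpi.
  assert (Hy : forall t, is_derive (fun t => ln (b + z t)) t (- k * L t)).
  { intro s. apply is_derive_Reals.
    replace (- k * L s) with (/ (b + z s) * (0 + df s)).
    2:{ rewrite Hdf. specialize (Hpos s). field. lra. }
    change (derivable_pt_lim (comp ln (fun t => b + z t)) s (/ (b + z s) * (0 + df s))).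
    apply derivable_pt_lim_comp.
    - apply (derivable_pt_lim_plus (fun _ => b) z). apply derivable_pt_lim_const.
      apply is_derive_Reals, Hd.
    - apply derivable_pt_lim_ln, Hpos. }
  assert (Hyb : forall s, - k * L s <= C).
  { intro s. specialize (HL s).
    assert (0 <= k * (c0 + L s)) by (apply Rmult_le_pos; lra). nra. }
  assert (Hyp : forall s, ln (b + z (s + 2 * PI)) = ln (b + z s)).
  { intro s; rewrite Hper; reflexivity. }
  pose proof (osc_bound _ _ C HC0 Hyp Hy Hyb) as Ho.
  split.
  - pose proof (Ho u2 t) as H.
    assert (ln b <= ln (b + z u2)) by (apply ln_mono; lra).
    rewrite <- (exp_ln (b + z t)) by auto.
    rewrite <- (exp_ln b) at 1 by auto. rewrite <- exp_plus. apply exp_mono. lra.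
  - pose proof (Ho t u1) as H.
    assert (ln (b + z u1) <= ln b) by (apply ln_mono; [apply Hpos|lra]).
    rewrite <- (exp_ln (b + z t)) by auto.
    rewrite <- (exp_ln b) at 2 by auto. rewrite <- exp_plus. apply exp_mono. lra.
Qed.

Lemma dpl_eq f x l l' : derivable_pt_lim f x l -> l = l' -> derivable_pt_lim f x l'.
Proof. intros H ->; exact H. Qed.

Lemma deriv_shift (f df : R -> R) s t :
  (forall t, is_derive f t (df t)) -> derivable_pt_lim (fun t => f (t - s)) t (df (t - s)).
Proof.
  intros Hd.
  change (derivable_pt_lim (comp f (fun t => t - s)) t (df (t - s))).
  eapply dpl_eq. apply derivable_pt_lim_comp.
  - apply (derivable_pt_lim_minus (fun t => t) (fun _ => s)).
    apply derivable_pt_lim_id. apply derivable_pt_lim_const.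
  - apply is_derive_Reals, Hd.
  - ring.
Qed.

Lemma deriv_F (x1 x2 y d1 d2 dy : R -> R) (a c e bb s : R) t :
  (forall t, is_derive x1 t (d1 t)) -> (forall t, is_derive x2 t (d2 t)) ->
  (forall t, is_derive y t (dy t)) ->
  is_derive (fun t => a * (c * x1 (t - s) + e * x2 (t - s)) * (bb + y t)) t
   (a * ((c * d1 (t - s) + e * d2 (t - s)) * (bb + y t)
          + (c * x1 (t - s) + e * x2 (t - s)) * dy t)).
Proof.
  intros H1 H2 H3. apply is_derive_Reals.
  change (derivable_pt_lim (mult_fct (fun t => a * (c * x1 (t - s) + e * x2 (t - s))) (fun t => bb + y t)) t
   (a * ((c * d1 (t - s) + e * d2 (t - s)) * (bb + y t)
          + (c * x1 (t - s) + e * x2 (t - s)) * dy t))).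
  eapply dpl_eq. apply derivable_pt_lim_mult.
  - apply (derivable_pt_lim_scal (fun t => c * x1 (t - s) + e * x2 (t - s))).
    apply (derivable_pt_lim_plus (fun t => c * x1 (t - s)) (fun t => e * x2 (t - s))).
    + apply (derivable_pt_lim_scal (fun t => x1 (t - s))). apply deriv_shift; auto.
    + apply (derivable_pt_lim_scal (fun t => x2 (t - s))). apply deriv_shift; auto.
  - apply (derivable_pt_lim_plus (fun _ => bb) y). apply derivable_pt_lim_const.
    apply is_derive_Reals, H3.
  - simpl. ring.
Qed.

Lemma sol_bounds (a11 a12 a21 a22 b1 b2 lam2 lam alpha tau : R) (x1 x2 : R -> R) :
  0 < a11 -> 0 < a12 -> 0 < a21 -> 0 < a22 -> 0 < b1 -> 0 < b2 ->
  0 < lam -> lam <= lam2 -> 0 <= alpha <= 1 ->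
  is_solution a11 a12 a21 a22 b1 b2 lam alpha tau x1 x2 ->
  in_Theta0 b1 b2 x1 x2 ->
  let C := lam2 * (a11 * b1 + a12 * b2 + (a21 * b1 + a22 * b2)) in
  (forall t, -b1 < x1 t /\ -b2 < x2 t) /\
  (forall t, b1 * exp (- (2 * PI * C)) <= b1 + x1 t <= b1 * exp (2 * PI * C) /\
             b2 * exp (- (2 * PI * C)) <= b2 + x2 t <= b2 * exp (2 * PI * C)).
Proof.
  intros Ha11 Ha12 Ha21 Ha22 Hb1 Hb2 Hl Hl2 Hal [[Hc1 [Hp1 [HI1 _]]] [[Hc2 [Hp2 [HI2 _]]] Hd]] HT C.
  pose proof PI_RGT_0 as Hpi.
  assert (Hpos : forall t, -b1 < x1 t /\ -b2 < x2 t).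
  { intro t. split.
    - destruct (periodic_reduce x1 (2*PI) ltac:(lra) Hp1 t) as [u [Hu ->]]. apply (HT u Hu).
    - destruct (periodic_reduce x2 (2*PI) ltac:(lra) Hp2 t) as [u [Hu ->]]. apply (HT u Hu). }
  split; [exact Hpos|].
  assert (Hk : alpha * lam <= lam2) by nra.
  assert (Hk0 : 0 <= alpha * lam) by nra.
  assert (HC0 : 0 <= C) by (unfold C; apply Rmult_le_pos; nra).
  destruct (sign_points x1 Hc1 HI1) as [S1 S1'].
  destruct (sign_points x2 Hc2 HI2) as [S2 S2'].
  intro t; split.
  - apply (comp_bound x1 (fun t => a11 * x1 (t - tau / lam) + a12 * x2 (t - tau / lam))
      (fun t => - alpha * lam * (a11 * x1 (t - tau / lam) + a12 * x2 (t - tau / lam)) * (b1 + x1 t))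
      b1 (alpha * lam) (a11 * b1 + a12 * b2) C); auto.
    + unfold C. apply Rmult_le_compat; nra.
    + intro s; specialize (Hpos s); lra.
    + intro s; apply Hd.
    + intro s; ring.
    + intro s. destruct (Hpos (s - tau / lam)). nra.
  - apply (comp_bound x2 (fun t => a21 * x1 (t - tau / lam) + a22 * x2 (t - tau / lam))
      (fun t => - alpha * lam * (a21 * x1 (t - tau / lam) + a22 * x2 (t - tau / lam)) * (b2 + x2 t))
      b2 (alpha * lam) (a21 * b1 + a22 * b2) C); auto.
    + unfold C. apply Rmult_le_compat; nra.
    + intro s; specialize (Hpos s); lra.
    + intro s; apply Hd.
    + intro s; ring.
    + intro s. destruct (Hpos (s - tau / lam)). nra.
Qed.

Lemma abs_le_inv u B : Rabs u <= B -> -B <= u <= B.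
Proof.
  intros H. pose proof (Rle_abs u). pose proof (Rle_abs (-u)). rewrite Rabs_Ropp in H1. lra.
Qed.

Lemma abs_mul_le p q P Q : Rabs p <= P -> Rabs q <= Q -> Rabs (p * q) <= P * Q.
Proof.
  intros Hp Hq. rewrite Rabs_mult. apply Rmult_le_compat; try apply Rabs_pos; auto.
Qed.

Lemma abs_lin_le c e u v B A : 0 < c -> 0 < e -> c + e <= A ->
  Rabs u <= B -> Rabs v <= B -> Rabs (c * u + e * v) <= A * B.
Proof.
  intros Hc He HA Hu Hv. pose proof (Rabs_pos u).
  apply abs_le_inv in Hu. apply abs_le_inv in Hv.
  apply Rabs_le. split; nra.
Qed.

Lemma sol_abs (a11 a12 a21 a22 b1 b2 lam2 lam alpha tau : R) (x1 x2 : R -> R) :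
  0 < a11 -> 0 < a12 -> 0 < a21 -> 0 < a22 -> 0 < b1 -> 0 < b2 ->
  0 < lam -> lam <= lam2 -> 0 <= alpha <= 1 ->
  is_solution a11 a12 a21 a22 b1 b2 lam alpha tau x1 x2 ->
  in_Theta0 b1 b2 x1 x2 ->
  let C := lam2 * (a11 * b1 + a12 * b2 + (a21 * b1 + a22 * b2)) in
  let Bx := (b1 + b2) * exp (2 * PI * C) in
  forall t, Rabs (x1 t) <= Bx /\ Rabs (x2 t) <= Bx /\
            Rabs (b1 + x1 t) <= Bx /\ Rabs (b2 + x2 t) <= Bx.
Proof.
  intros Ha11 Ha12 Ha21 Ha22 Hb1 Hb2 Hl Hl2 Hal Hsol HT C Bx t.
  destruct (sol_bounds a11 a12 a21 a22 b1 b2 lam2 lam alpha tau x1 x2) as [Hpos Hb]; auto.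
  fold C in Hpos, Hb.
  assert (HC0 : 0 <= C) by (unfold C; apply Rmult_le_pos; nra).
  pose proof PI_RGT_0 as Hpi.
  assert (HE : 1 <= exp (2 * PI * C)).
  { rewrite <- exp_0. apply exp_mono. nra. }
  destruct (Hpos t) as [P1 P2]. destruct (Hb t) as [[B1 B1'] [B2 B2']].
  unfold Bx. repeat split; apply Rabs_le; split; nra.
Qed.

Lemma part2 (a11 a12 a21 a22 b1 b2 lam1 lam2 : R) :
  0 < a11 -> 0 < a12 -> 0 < a21 -> 0 < a22 -> 0 < b1 -> 0 < b2 -> 0 < lam1 ->
  exists alpha0 : R, 0 < alpha0 < 1 /\
     forall (lam alpha tau : R) (x1 x2 : R -> R),
       lam1 <= lam <= lam2 -> 0 <= alpha <= alpha0 -> 1 <= tau ->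
       is_solution a11 a12 a21 a22 b1 b2 lam alpha tau x1 x2 ->
       in_Theta0 b1 b2 x1 x2 ->
       forall t, x1 t = 0 /\ x2 t = 0.
Proof.
  intros Ha11 Ha12 Ha21 Ha22 Hb1 Hb2 Hl1.
  set (C := lam2 * (a11 * b1 + a12 * b2 + (a21 * b1 + a22 * b2))).
  set (Bx := (b1 + b2) * exp (2 * PI * C)).
  set (A := a11 + a12 + a21 + a22).
  set (K := 2 * PI * lam2 * A * Bx).
  pose proof PI_RGT_0 as Hpi.
  assert (HBx : 0 < Bx) by (unfold Bx; apply Rmult_lt_0_compat; [lra | apply exp_pos]).
  set (K' := Rabs K).
  assert (HK0 : 0 <= K') by apply Rabs_pos.
  assert (HKK : K <= K') by apply Rle_abs.
  clearbody K'.
  exists (/ (2 * K' + 2)).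
  assert (Hd : 0 < 2 * K' + 2) by lra.
  split.
  { split. apply Rinv_0_lt_compat; lra.
    apply (Rmult_lt_reg_r (2 * K' + 2)); [lra|]. rewrite Rinv_l; lra. }
  intros lam alpha tau x1 x2 Hlam Hal Htau Hsol HT.
  assert (Hl2 : lam <= lam2) by lra.
  assert (Hal1 : alpha * (2 * K' + 2) <= 1).
  { destruct Hal as [_ Ha]. apply (Rmult_le_compat_r (2 * K' + 2)) in Ha; [|lra].
    rewrite Rinv_l in Ha; lra. }
  assert (HaK : alpha * K' <= / 2) by nra.
  assert (Hal' : 0 <= alpha <= 1) by nra.
  pose proof (sol_abs a11 a12 a21 a22 b1 b2 lam2 lam alpha tau x1 x2 Ha11 Ha12 Ha21 Ha22 Hb1 Hb2 ltac:(lra) Hl2 Hal' Hsol HT) as Hab.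
  destruct Hsol as [[Hc1 [Hp1 [HI1 _]]] [[Hc2 [Hp2 [HI2 _]]] Hder]].
  destruct (sign_points x1 Hc1 HI1) as [[u1 U1] [v1 V1]].
  destruct (sign_points x2 Hc2 HI2) as [[u2 U2] [v2 V2]].
  set (s := tau / lam).
  assert (Hlam0 : 0 < lam) by lra.
  assert (Hkabs : Rabs (- alpha * lam) <= alpha * lam2) by (apply Rabs_le; split; nra).
  assert (Comp : forall (z F : R -> R) (bb c e m : R),
     0 < c -> 0 < e -> c + e <= A ->
     (forall t, z (t + 2 * PI) = z t) ->
     (forall t, is_derive z t (F t)) ->
     (forall t, F t = - alpha * lam * (c * x1 (t - s) + e * x2 (t - s)) * (bb + z t)) ->
     (forall t, Rabs (bb + z t) <= Bx) ->
     (exists u, z u <= 0) -> (exists v, 0 <= z v) ->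
     (forall t, Rabs (x1 t) <= m /\ Rabs (x2 t) <= m) ->
     forall t, Rabs (z t) <= m / 2).
  { intros z F bb c e m Hc He HcA Hzp HzD HF Hbb [u Hu] [v Hv] Hm t.
    assert (m0 : 0 <= m) by (destruct (Hm 0); pose proof (Rabs_pos (x1 0)); lra).
    set (S := alpha * lam2 * (A * m) * Bx).
    assert (HFb : forall r, Rabs (F r) <= S).
    { intro r. rewrite HF. unfold S. apply abs_mul_le; [apply abs_mul_le|apply Hbb].
      exact Hkabs. destruct (Hm (r - s)). apply abs_lin_le; auto. }
    assert (S0 : 0 <= S) by (pose proof (HFb 0); pose proof (Rabs_pos (F 0)); lra).
    pose proof (osc_bound z F S S0 Hzp HzD (fun r => Rle_trans _ _ _ (Rle_abs _) (HFb r)) t u) as O1.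
    assert (O2 : - z t <= - z v + 2 * PI * S).
    { apply (osc_bound (fun r => - z r) (fun r => - F r) S S0).
      - intro r; rewrite Hzp; reflexivity.
      - intro r. apply (is_derive_opp z r (F r)). apply HzD.
      - intro r. destruct (abs_le_inv _ _ (HFb r)). lra. }
    assert (E1 : 2 * PI * S = alpha * K * m) by (unfold S, K; ring).
    assert (E2 : alpha * K * m <= alpha * K' * m).
    { apply Rmult_le_compat_r; auto. apply Rmult_le_compat_l; lra. }
    assert (E3 : alpha * K' * m <= / 2 * m) by (apply Rmult_le_compat_r; auto).
    apply Rabs_le; split; lra. }
  assert (Hab' : forall t, Rabs (x1 t) <= Bx /\ Rabs (x2 t) <= Bx /\
            Rabs (b1 + x1 t) <= Bx /\ Rabs (b2 + x2 t) <= Bx) by exact Hab.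
  clear Hab.
  assert (Step : forall m, (forall t, Rabs (x1 t) <= m /\ Rabs (x2 t) <= m) ->
                 forall t, Rabs (x1 t) <= m / 2 /\ Rabs (x2 t) <= m / 2).
  { intros m Hm t. split.
    - apply (Comp x1 (fun t => - alpha * lam * (a11 * x1 (t - s) + a12 * x2 (t - s)) * (b1 + x1 t)) b1 a11 a12 m); auto.
      + unfold A; lra.
      + intro r; apply Hder.
      + intro r; apply Hab'.
      + exists u1; auto.
      + exists v1; auto.
    - apply (Comp x2 (fun t => - alpha * lam * (a21 * x1 (t - s) + a22 * x2 (t - s)) * (b2 + x2 t)) b2 a21 a22 m); auto.
      + unfold A; lra.
      + intro r; apply Hder.
      + intro r; apply Hab'.
      + exists u2; auto.
      + exists v2; auto. }
  assert (Iter : forall n t, Rabs (x1 t) <= (/ 2) ^ n * Bx /\ Rabs (x2 t) <= (/ 2) ^ n * Bx).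
  { induction n as [|n IH]; intro t.
    - simpl. rewrite Rmult_1_l. split; apply Hab'.
    - replace ((/ 2) ^ S n * Bx) with ((/ 2) ^ n * Bx / 2) by (simpl; field).
      apply Step. exact IH. }
  assert (Zero : forall w : R, (forall n, Rabs w <= (/ 2) ^ n * Bx) -> w = 0).
  { intros w Hw. destruct (Req_dec w 0) as [|Hne]; auto. exfalso.
    assert (Hw0 : 0 < Rabs w) by (apply Rabs_pos_lt; auto).
    destruct (pow_lt_1_zero (/ 2) ltac:(rewrite Rabs_pos_eq; lra) (Rabs w / Bx) ltac:(apply Rdiv_lt_0_compat; auto)) as [N HN].
    specialize (HN N (le_n N)). specialize (Hw N).
    rewrite Rabs_pos_eq in HN by (apply pow_le; lra).
    apply (Rmult_lt_compat_r Bx) in HN; auto.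
    unfold Rdiv in HN. rewrite Rmult_assoc, Rinv_l, Rmult_1_r in HN by lra. lra. }
  intro t. split; apply Zero; intro n; apply Iter.
Qed.

Lemma part1 (a11 a12 a21 a22 b1 b2 lam1 lam2 : R) :
  0 < a11 -> 0 < a12 -> 0 < a21 -> 0 < a22 -> 0 < b1 -> 0 < b2 -> 0 < lam1 -> 0 < lam2 ->
  exists m0 d1 d2 d3 d4 : R,
     0 < m0 /\ 0 < d1 /\ 0 < d2 /\ 0 < d3 /\ 0 < d4 /\
     forall (lam alpha tau : R) (x1 x2 : R -> R),
       lam1 <= lam <= lam2 -> 0 <= alpha <= 1 -> 1 <= tau ->
       is_solution a11 a12 a21 a22 b1 b2 lam alpha tau x1 x2 ->
       in_Theta0 b1 b2 x1 x2 ->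
       supnorm_lt (Derive x1) m0 /\ supnorm_lt (Derive x2) m0 /\
       (forall t, ex_derive (Derive x1) t /\ ex_derive (Derive x2) t) /\
       supnorm_lt (Derive (Derive x1)) m0 /\
       supnorm_lt (Derive (Derive x2)) m0 /\
       (forall t, 0 <= t <= 2 * PI ->
          -b1 < -d1 /\ -d1 < x1 t /\ x1 t < d3 /\
          -b2 < -d2 /\ -d2 < x2 t /\ x2 t < d4).
Proof.
  intros Ha11 Ha12 Ha21 Ha22 Hb1 Hb2 Hl1 Hl2.
  set (C := lam2 * (a11 * b1 + a12 * b2 + (a21 * b1 + a22 * b2))).
  set (E := exp (2 * PI * C)).
  set (e := exp (- (2 * PI * C))).
  set (Bx := (b1 + b2) * E).
  set (A := a11 + a12 + a21 + a22).
  set (P := lam2 * (A * Bx) * Bx).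
  set (Q := lam2 * (A * P * Bx + A * Bx * P)).
  pose proof PI_RGT_0 as Hpi.
  assert (HC0 : 0 <= C) by (unfold C; apply Rmult_le_pos; nra).
  assert (HE : 1 <= E) by (unfold E; rewrite <- exp_0; apply exp_mono; nra).
  assert (He0 : 0 < e) by apply exp_pos.
  assert (He1 : e <= 1) by (unfold e; rewrite <- exp_0; apply exp_mono; nra).
  assert (HBx : 0 < Bx) by (unfold Bx; nra).
  assert (HA : 0 < A) by (unfold A; lra).
  assert (HP : 0 <= P) by (unfold P; apply Rmult_le_pos; [apply Rmult_le_pos|]; nra).
  assert (HQ : 0 <= Q) by (unfold Q; apply Rmult_le_pos; [lra|]; apply Rplus_le_le_0_compat; apply Rmult_le_pos; nra).
  exists (P + Q + 1), (b1 - b1 * e / 2), (b2 - b2 * e / 2), (b1 * E), (b2 * E).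
  split; [lra|]. split; [nra|]. split; [nra|]. split; [nra|]. split; [nra|].
  intros lam alpha tau x1 x2 Hlam Hal Htau Hsol HT.
  assert (Hl : 0 < lam) by lra.
  assert (Hlam2 : lam <= lam2) by lra.
  pose proof (sol_abs a11 a12 a21 a22 b1 b2 lam2 lam alpha tau x1 x2 Ha11 Ha12 Ha21 Ha22 Hb1 Hb2 Hl Hlam2 Hal Hsol HT) as Hab.
  assert (Hab' : forall t, Rabs (x1 t) <= Bx /\ Rabs (x2 t) <= Bx /\
            Rabs (b1 + x1 t) <= Bx /\ Rabs (b2 + x2 t) <= Bx) by exact Hab.
  clear Hab.
  destruct (sol_bounds a11 a12 a21 a22 b1 b2 lam2 lam alpha tau x1 x2 Ha11 Ha12 Ha21 Ha22 Hb1 Hb2 Hl Hlam2 Hal Hsol HT) as [Hpos Hbd].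
  assert (Hbd' : forall t, b1 * e <= b1 + x1 t <= b1 * E /\ b2 * e <= b2 + x2 t <= b2 * E) by exact Hbd.
  clear Hbd.
  destruct Hsol as [_ [_ Hder]].
  set (s := tau / lam).
  set (F1 := fun t => - alpha * lam * (a11 * x1 (t - s) + a12 * x2 (t - s)) * (b1 + x1 t)).
  set (F2 := fun t => - alpha * lam * (a21 * x1 (t - s) + a22 * x2 (t - s)) * (b2 + x2 t)).
  assert (HD1 : forall t, is_derive x1 t (F1 t)) by (intro t; apply Hder).
  assert (HD2 : forall t, is_derive x2 t (F2 t)) by (intro t; apply Hder).
  assert (HDe1 : forall t, Derive x1 t = F1 t) by (intro t; apply is_derive_unique, HD1).
  assert (HDe2 : forall t, Derive x2 t = F2 t) by (intro t; apply is_derive_unique, HD2).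
  assert (Hkabs : Rabs (- alpha * lam) <= lam2) by (apply Rabs_le; split; nra).
  assert (HF1 : forall t, Rabs (F1 t) <= P).
  { intro t. unfold F1, P. apply abs_mul_le; [apply abs_mul_le|apply Hab']. exact Hkabs.
    apply abs_lin_le; auto; [unfold A; lra| apply Hab' | apply Hab']. }
  assert (HF2 : forall t, Rabs (F2 t) <= P).
  { intro t. unfold F2, P. apply abs_mul_le; [apply abs_mul_le|apply Hab']. exact Hkabs.
    apply abs_lin_le; auto; [unfold A; lra| apply Hab' | apply Hab']. }
  set (G1 := fun t => - alpha * lam * ((a11 * F1 (t - s) + a12 * F2 (t - s)) * (b1 + x1 t)
          + (a11 * x1 (t - s) + a12 * x2 (t - s)) * F1 t)).
  set (G2 := fun t => - alpha * lam * ((a21 * F1 (t - s) + a22 * F2 (t - s)) * (b2 + x2 t)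
          + (a21 * x1 (t - s) + a22 * x2 (t - s)) * F2 t)).
  assert (HG1 : forall t, is_derive (Derive x1) t (G1 t)).
  { intro t. apply (is_derive_ext F1). intro r; symmetry; apply HDe1.
    apply (deriv_F x1 x2 x1 F1 F2 F1 (- alpha * lam) a11 a12 b1 s t HD1 HD2 HD1). }
  assert (HG2 : forall t, is_derive (Derive x2) t (G2 t)).
  { intro t. apply (is_derive_ext F2). intro r; symmetry; apply HDe2.
    apply (deriv_F x1 x2 x2 F1 F2 F2 (- alpha * lam) a21 a22 b2 s t HD1 HD2 HD2). }
  assert (HGb1 : forall t, Rabs (G1 t) <= Q).
  { intro t. unfold G1, Q. apply abs_mul_le; [exact Hkabs|].
    eapply Rle_trans; [apply Rabs_triang|]. apply Rplus_le_compat; apply abs_mul_le.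
    - apply abs_lin_le; auto; unfold A; lra.
    - apply Hab'.
    - apply abs_lin_le; auto; [unfold A; lra| apply Hab' | apply Hab'].
    - apply HF1. }
  assert (HGb2 : forall t, Rabs (G2 t) <= Q).
  { intro t. unfold G2, Q. apply abs_mul_le; [exact Hkabs|].
    eapply Rle_trans; [apply Rabs_triang|]. apply Rplus_le_compat; apply abs_mul_le.
    - apply abs_lin_le; auto; unfold A; lra.
    - apply Hab'.
    - apply abs_lin_le; auto; [unfold A; lra| apply Hab' | apply Hab'].
    - apply HF2. }
  split; [exists (P + Q); split; [lra|]; intros t _; rewrite HDe1; specialize (HF1 t); lra|].
  split; [exists (P + Q); split; [lra|]; intros t _; rewrite HDe2; specialize (HF2 t); lra|].
  split; [intro t; split; [exists (G1 t); apply HG1 | exists (G2 t); apply HG2]|].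
  split; [exists (P + Q); split; [lra|]; intros t _; rewrite (is_derive_unique _ _ _ (HG1 t)); specialize (HGb1 t); lra|].
  split; [exists (P + Q); split; [lra|]; intros t _; rewrite (is_derive_unique _ _ _ (HG2 t)); specialize (HGb2 t); lra|].
  intros t _. destruct (Hbd' t) as [[B1 B1'] [B2 B2']].
  repeat split; nra.
Qed.

Theorem lemma3p1 (a11 a12 a21 a22 b1 b2 : R) :
  0 < a11 -> 0 < a12 -> 0 < a21 -> 0 < a22 -> 0 < b1 -> 0 < b2 ->
  cond_A1 a11 a12 a21 a22 -> cond_A2 a11 a12 a21 a22 b1 b2 ->
  forall lam1 lam2 : R, 0 < lam1 -> 0 < lam2 -> lam1 < lam2 ->
  (exists m0 d1 d2 d3 d4 : R,
     0 < m0 /\ 0 < d1 /\ 0 < d2 /\ 0 < d3 /\ 0 < d4 /\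
     forall (lam alpha tau : R) (x1 x2 : R -> R),
       lam1 <= lam <= lam2 -> 0 <= alpha <= 1 -> 1 <= tau ->
       is_solution a11 a12 a21 a22 b1 b2 lam alpha tau x1 x2 ->
       in_Theta0 b1 b2 x1 x2 ->
       supnorm_lt (Derive x1) m0 /\ supnorm_lt (Derive x2) m0 /\
       (forall t, ex_derive (Derive x1) t /\ ex_derive (Derive x2) t) /\
       supnorm_lt (Derive (Derive x1)) m0 /\
       supnorm_lt (Derive (Derive x2)) m0 /\
       (forall t, 0 <= t <= 2 * PI ->
          -b1 < -d1 /\ -d1 < x1 t /\ x1 t < d3 /\
          -b2 < -d2 /\ -d2 < x2 t /\ x2 t < d4))
  /\
  (exists alpha0 : R, 0 < alpha0 < 1 /\
     forall (lam alpha tau : R) (x1 x2 : R -> R),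
       lam1 <= lam <= lam2 -> 0 <= alpha <= alpha0 -> 1 <= tau ->
       is_solution a11 a12 a21 a22 b1 b2 lam alpha tau x1 x2 ->
       in_Theta0 b1 b2 x1 x2 ->
       forall t, x1 t = 0 /\ x2 t = 0).
Proof.
  intros Ha11 Ha12 Ha21 Ha22 Hb1 Hb2 _ _ lam1 lam2 Hl1 Hl2 _.
  split.
  - apply (part1 a11 a12 a21 a22 b1 b2 lam1 lam2); auto.
  - apply (part2 a11 a12 a21 a22 b1 b2 lam1 lam2); auto.
Qed.
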